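(* Let $(A,B)$ be controllable, $Q,R$ positive definite, $\theta\in\mathbb R^n$, and let $P^e$ be the unique positive definite solution of the DARE $P^e=Q+A^\top(P^e-P^eB(B^\top P^eB+R)^{-1}B^\top P^e)A$. Set $M^e=P^e-P^eB(R+B^\top P^eB)^{-1}B^\top P^e$, $H^e=M^e-M^eA(Q+A^\top M^eA)^{-1}A^\top M^e$, $K^e=(R+B^\top P^eB)^{-1}B^\top P^eA$, $K'=(R+B^\top P^eB)^{-1}B^\top P^e$, $\alpha^e=(I-(A-BK^e)^\top)^{-1}Q\theta$ (so $\alpha^e=Q\theta+(A-BK^e)^\top\alpha^e$), and $\beta^e=(P^e)^{-1}\alpha^e=F\theta$ with $F=(P^e)^{-1}(I-(A-BK^e)^\top)^{-1}Q$. Then: (i) for every initial state $x_0$, the optimal average cost $\lambda^e=\lim_{N\to\infty}\frac1N\min\sum_{t=0}^{N-1}\big[\frac12(x_t-\theta)^\top Q(x_t-\theta)+\frac12u_t^\top Ru_t\big]$ (minimum over $x_{t+1}=Ax_t+Bu_t$) exists, does not depend on $x_0$, and equals $\frac12(A\theta-\beta^e)^\top H^e(A\theta-\beta^e)$; (ii) $h^e(x)=\frac12(x-\beta^e)^\top P^e(x-\beta^e)$ satisfies the Bellman equation $h^e(x)+\lambda^e=\min_u\big(\frac12(x-\theta)^\top Q(x-\theta)+\frac12u^\top Ru+h^e(Ax+Bu)\big)$ for all $x$; (iii) the stationary controller $u=-K^ex+K'\beta^e$ attains long-run average cost at most $\lambda^e$, hence is optimal.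
   Context: Here $I-(A-BK^e)^\top$ is invertible since $A-BK^e$ is Schur stable (all eigenvalues in the open unit disk). Matrix inequalities/positive definiteness are in the Loewner sense. *)

(* Defs.v *)
From HB Require Import structures.
From mathcomp Require Import all_boot all_order all_algebra.
Set Implicit Arguments. Unset Strict Implicit. Unset Printing Implicit Defensive.
Import Order.TTheory GRing.Theory Num.Theory.
Local Open Scope ring_scope.

Section LQT.
Variable R : archiRcfType.

Definition qf (n : nat) (M : 'M[R]_n) (x : 'cV[R]_n) : R := (x^T *m M *m x) 0 0.

Definition posdef (n : nat) (M : 'M[R]_n) : Prop :=
  M^T = M /\ forall x : 'cV[R]_n, x != 0 -> 0 < qf M x.

Definition controllable (n m : nat) (A : 'M[R]_n) (B : 'M[R]_(n, m)) : Prop :=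
  \rank (\mxrow_(k < n) (A ^+ k *m B)) = n.

Fixpoint traj (n m : nat) (A : 'M[R]_n) (B : 'M[R]_(n, m)) (x0 : 'cV[R]_n)
    (u : nat -> 'cV[R]_m) (t : nat) : 'cV[R]_n :=
  match t with
  | 0 => x0
  | t'.+1 => A *m traj A B x0 u t' + B *m u t'
  end.

Fixpoint fb_traj (n m : nat) (A : 'M[R]_n) (B : 'M[R]_(n, m)) (K : 'M[R]_(m, n))
    (c : 'cV[R]_m) (x0 : 'cV[R]_n) (t : nat) : 'cV[R]_n :=
  match t with
  | 0 => x0
  | t'.+1 => A *m fb_traj A B K c x0 t' + B *m (- K *m fb_traj A B K c x0 t' + c)
  end.

Definition stage (n m : nat) (Q : 'M[R]_n) (Rw : 'M[R]_m) (theta : 'cV[R]_n)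
    (x : 'cV[R]_n) (u : 'cV[R]_m) : R :=
  2^-1 * qf Q (x - theta) + 2^-1 * qf Rw u.

Definition cost (n m : nat) (A : 'M[R]_n) (B : 'M[R]_(n, m)) (Q : 'M[R]_n)
    (Rw : 'M[R]_m) (theta : 'cV[R]_n) (x0 : 'cV[R]_n) (u : nat -> 'cV[R]_m)
    (N : nat) : R :=
  \sum_(t < N) stage Q Rw theta (traj A B x0 u t) (u t).

Definition is_min_cost (n m : nat) (A : 'M[R]_n) (B : 'M[R]_(n, m)) (Q : 'M[R]_n)
    (Rw : 'M[R]_m) (theta : 'cV[R]_n) (x0 : 'cV[R]_n) (N : nat) (v : R) : Prop :=
  (exists u, cost A B Q Rw theta x0 u N = v) /\
  (forall u, v <= cost A B Q Rw theta x0 u N).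

Definition cvg_to (s : nat -> R) (l : R) : Prop :=
  forall eps : R, 0 < eps -> exists N0 : nat, forall N, (N0 <= N)%N -> `|s N - l| < eps.

Definition limsup_le (s : nat -> R) (l : R) : Prop :=
  forall eps : R, 0 < eps -> exists N0 : nat, forall N, (N0 <= N)%N -> s N <= l + eps.

Definition liminf_ge (s : nat -> R) (l : R) : Prop :=
  forall eps : R, 0 < eps -> exists N0 : nat, forall N, (N0 <= N)%N -> l - eps <= s N.

End LQT.

(* Main.v *)
Require Import Defs.
From HB Require Import structures.
From mathcomp Require Import all_boot all_order all_algebra.
From mathcomp Require Import ring lra.
From Stdlib Require Import ClassicalEpsilon.
Set Implicit Arguments. Unset Strict Implicit. Unset Printing Implicit Defensive.
Import Order.TTheory GRing.Theory Num.Theory.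
Local Open Scope ring_scope.


Section Tools.
Variable R : archiRcfType.

Definition bf (p q : nat) (M : 'M[R]_(p,q)) (x : 'cV[R]_p) (y : 'cV[R]_q) : R := (x^T *m M *m y) 0 0.

Lemma qfE n (M : 'M[R]_n) x : qf M x = bf M x x. Proof. by []. Qed.

Lemma bfDl p q (M : 'M[R]_(p,q)) x1 x2 y : bf M (x1 + x2) y = bf M x1 y + bf M x2 y.
Proof. by rewrite /bf linearD /= !mulmxDl mxE. Qed.
Lemma bfDr p q (M : 'M[R]_(p,q)) x y1 y2 : bf M x (y1 + y2) = bf M x y1 + bf M x y2.
Proof. by rewrite /bf mulmxDr mxE. Qed.
Lemma bfNl p q (M : 'M[R]_(p,q)) x y : bf M (- x) y = - bf M x y.
Proof. by rewrite /bf linearN /= !mulNmx mxE. Qed.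
Lemma bfNr p q (M : 'M[R]_(p,q)) x y : bf M x (- y) = - bf M x y.
Proof. by rewrite /bf mulmxN mxE. Qed.
Lemma bfBl p q (M : 'M[R]_(p,q)) x1 x2 y : bf M (x1 - x2) y = bf M x1 y - bf M x2 y.
Proof. by rewrite bfDl bfNl. Qed.
Lemma bfBr p q (M : 'M[R]_(p,q)) x y1 y2 : bf M x (y1 - y2) = bf M x y1 - bf M x y2.
Proof. by rewrite bfDr bfNr. Qed.
Lemma bfZl p q (M : 'M[R]_(p,q)) a x y : bf M (a *: x) y = a * bf M x y.
Proof. by rewrite /bf linearZ /= -!scalemxAl mxE. Qed.
Lemma bfZr p q (M : 'M[R]_(p,q)) a x y : bf M x (a *: y) = a * bf M x y.
Proof. by rewrite /bf -scalemxAr mxE. Qed.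
Lemma bf0l p q (M : 'M[R]_(p,q)) y : bf M 0 y = 0.
Proof. by rewrite /bf trmx0 !mul0mx mxE. Qed.
Lemma bf0r p q (M : 'M[R]_(p,q)) x : bf M x 0 = 0.
Proof. by rewrite /bf mulmx0 mxE. Qed.
Lemma bfDm p q (M N : 'M[R]_(p,q)) x y : bf (M + N) x y = bf M x y + bf N x y.
Proof. by rewrite /bf mulmxDr mulmxDl mxE. Qed.
Lemma bfNm p q (M : 'M[R]_(p,q)) x y : bf (- M) x y = - bf M x y.
Proof. by rewrite /bf mulmxN mulNmx mxE. Qed.
Lemma bfBm p q (M N : 'M[R]_(p,q)) x y : bf (M - N) x y = bf M x y - bf N x y.
Proof. by rewrite bfDm bfNm. Qed.
Lemma bf0m p q (x : 'cV[R]_p) (y : 'cV[R]_q) : bf (0 : 'M_(p,q)) x y = 0.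
Proof. by rewrite /bf mulmx0 mul0mx mxE. Qed.
Lemma bfMr p q k (M : 'M[R]_(p,q)) (C : 'M[R]_(q,k)) x (y : 'cV[R]_k) :
  bf M x (C *m y) = bf (M *m C) x y.
Proof. by rewrite /bf !mulmxA. Qed.
Lemma bfMl p q k (M : 'M[R]_(p,q)) (C : 'M[R]_(p,k)) (x : 'cV[R]_k) y :
  bf M (C *m x) y = bf (C^T *m M) x y.
Proof. by rewrite /bf trmx_mul !mulmxA. Qed.
Lemma bf_tr p q (M : 'M[R]_(p,q)) x y : bf M x y = bf M^T y x.
Proof.
rewrite /bf; transitivity ((x^T *m M *m y)^T 0 0); first by rewrite [RHS]mxE.
by rewrite !trmx_mul trmxK mulmxA.
Qed.

Lemma bf_sym n (M : 'M[R]_n) x y : M^T = M -> bf M x y = bf M y x.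
Proof. by move=> hM; rewrite bf_tr hM. Qed.

Lemma qfD n (M : 'M[R]_n) x y : M^T = M ->
  qf M (x + y) = qf M x + 2 * bf M x y + qf M y.
Proof. by move=> hM; rewrite !qfE bfDl !bfDr (bf_sym y x hM); ring. Qed.

Lemma qfN n (M : 'M[R]_n) x : qf M (- x) = qf M x.
Proof. by rewrite !qfE bfNl bfNr opprK. Qed.

Lemma qfZ n (M : 'M[R]_n) a x : qf M (a *: x) = a ^+ 2 * qf M x.
Proof. by rewrite !qfE bfZl bfZr; ring. Qed.

Lemma qfM n k (M : 'M[R]_n) (C : 'M[R]_(n,k)) x : qf M (C *m x) = qf (C^T *m M *m C) x.
Proof. by rewrite !qfE bfMl bfMr. Qed.

Lemma unit_of_inj k (X : 'M[R]_k) : (forall v : 'rV[R]_k, v *m X = 0 -> v = 0) -> X \in unitmx.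
Proof.
move=> hX; rewrite -row_free_unit -kermx_eq0; apply/negP => /negP /rowV0Pn [v hv nv].
move/submxP: hv => [D hD].
have : v *m X = 0 by rewrite hD -mulmxA mulmx_ker mulmx0.
by move/hX => v0; move: nv; rewrite v0 eqxx.
Qed.

Definition psd n (M : 'M[R]_n) := forall x, 0 <= qf M x.

Lemma posdef_psd n (M : 'M[R]_n) : posdef M -> psd M.
Proof.
move=> [_ hM] x; have [->|nx] := eqVneq x 0; last exact/ltW/hM.
by rewrite qfE bf0l.
Qed.

Lemma posdef_unit n (M : 'M[R]_n) : posdef M -> M \in unitmx.
Proof.
move=> [_ hM]; apply: unit_of_inj => v hv.
have [//|nv] := eqVneq v 0.
have : v^T != 0 by apply: contra nv => /eqP h; rewrite -(trmxK v) h trmx0.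
move/hM; rewrite /qf trmxK hv mul0mx mxE ltxx //.
Qed.

Lemma CS n (M : 'M[R]_n) y z : posdef M -> bf M y z ^+ 2 <= qf M y * qf M z.
Proof.
move=> hM; have [sM pM] := hM.
have [->|ny] := eqVneq y 0; first by rewrite bf0l !qfE bf0l; lra.
have ha := pM _ ny; set a := qf M y in ha *.
set b := bf M y z.
have := posdef_psd hM (z - (b / a) *: y).
rewrite qfD // qfN qfZ bfNr bfZr -/a (bf_sym _ _ sM) -/b => h.
set t := b / a in h.
have hb : b = t * a by rewrite /t divfK // gt_eqF.
move: h; rewrite hb => h.
have h2 : 0 <= a * (qf M z - t ^+ 2 * a) by apply: mulr_ge0; lra.
nra.
Qed.

Lemma coord_bound n (Q : 'M[R]_n) (w : 'cV[R]_n) i : posdef Q ->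
  w i 0 ^+ 2 <= qf Q (invmx Q *m ('e_i)^T) * qf Q w.
Proof.
move=> hQ; have [sQ _] := hQ.
have -> : w i 0 = bf Q (invmx Q *m ('e_i)^T) w.
  rewrite bfMl trmx_inv sQ mulVmx ?posdef_unit // /bf trmxK mulmx1.
  rewrite -(rowE i w).
  by rewrite mxE.
exact: CS.
Qed.

Lemma dominate n (Q N : 'M[R]_n) : posdef Q ->
  exists C, 0 <= C /\ forall w, qf N w <= C * qf Q w.
Proof.
move=> hQ.
pose d i := qf Q (invmx Q *m ('e_i)^T).
pose D := \sum_i d i.
have d0 : forall i, 0 <= d i by move=> i; exact: posdef_psd.
have D0 : 0 <= D by apply: sumr_ge0 => i _.
have dD : forall i, d i <= D.
  move=> i; rewrite /D (bigD1 i) //= lerDl; exact: sumr_ge0.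
exists (\sum_j \sum_i `|N i j| * D); split.
  by apply: sumr_ge0 => j _; apply: sumr_ge0 => i _; apply: mulr_ge0.
move=> w; have q0 := posdef_psd hQ w.
have wb : forall i, w i 0 ^+ 2 <= D * qf Q w.
  by move=> i; apply: le_trans (coord_bound w i hQ) _; apply: ler_wpM2r => //; apply: dD.
rewrite /qf mxE mulr_suml; apply: ler_sum => j _.
rewrite mxE mulr_suml mulr_suml; apply: ler_sum => i _.
rewrite mxE.
have hi := wb i; have hj := wb j.
have: w i 0 * N i j * w j 0 <= `|N i j| * ((w i 0 ^+ 2 + w j 0 ^+ 2) / 2).
  have [hN|hN] := leP 0 (N i j).
    rewrite ger0_norm //.
    have := mulr_ge0 hN (sqr_ge0 (w i 0 - w j 0)); nra.
  rewrite ltr0_norm //.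
  have hN' : 0 <= - N i j by lra.
  have := mulr_ge0 hN' (sqr_ge0 (w i 0 + w j 0)); nra.
move=> h; apply: le_trans h _; rewrite -mulrA; apply: ler_wpM2l => //.
move: hi hj; rewrite /qf; lra.
Qed.
End Tools.


Section Main.
Variable R : archiRcfType.
Variables n m : nat.
Variables (A : 'M[R]_n) (B : 'M[R]_(n, m)) (Q : 'M[R]_n) (Rw : 'M[R]_m)
  (theta : 'cV[R]_n) (P : 'M[R]_n).
Hypothesis hQ : posdef Q.
Hypothesis hR : posdef Rw.
Hypothesis hP : posdef P.
Hypothesis hD : P = Q + A^T *m (P - P *m B *m invmx (B^T *m P *m B + Rw) *m B^T *m P) *m A.

Let S := Rw + B^T *m P *m B.
Let X := B^T *m P.
Let Me := P - P *m B *m invmx S *m B^T *m P.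
Let K' := invmx S *m B^T *m P.

Lemma sP : P^T = P. Proof. by case: hP. Qed.
Lemma sR : Rw^T = Rw. Proof. by case: hR. Qed.
Lemma sQ : Q^T = Q. Proof. by case: hQ. Qed.
Lemma sS : S^T = S.
Proof. by rewrite /S linearD /= sR !trmx_mul trmxK sP mulmxA. Qed.

Lemma qfS u : qf S u = qf Rw u + qf P (B *m u).
Proof. by rewrite /S !qfE bfDm -bfMr -bfMl. Qed.

Lemma Spd : posdef S.
Proof.
split; first exact: sS.
move=> u nu; rewrite qfS; have := (proj2 hR) u nu; have := posdef_psd hP (B *m u); lra.
Qed.

Lemma uS : S \in unitmx. Proof. exact: posdef_unit Spd. Qed.

Lemma sSinv : (invmx S)^T = invmx S. Proof. by rewrite trmx_inv sS. Qed.

Lemma SK : S *m K' = X.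
Proof. by rewrite /K' !mulmxA mulmxV ?uS // mul1mx. Qed.

Lemma XT : X^T = P *m B. Proof. by rewrite /X trmx_mul trmxK sP. Qed.

Lemma MeX : Me = P - X^T *m invmx S *m X.
Proof. by rewrite /Me XT /X !mulmxA. Qed.

Lemma sMe : Me^T = Me.
Proof.
by rewrite MeX linearB /= sP !trmx_mul trmxK sSinv !trmxK sP !mulmxA.
Qed.

Lemma hD' : P = Q + A^T *m Me *m A.
Proof. by rewrite {1}hD /Me /S (addrC (B^T *m P *m B) Rw). Qed.

Lemma LQ z u : qf Rw u + qf P (z + B *m u) = qf Me z + qf S (u + K' *m z).
Proof.
have e1 : qf Me z = qf P z - qf (invmx S) (X *m z).
  by rewrite MeX !qfE bfBm -bfMr -bfMl.
have e2 := qfD u (K' *m z) sS.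
have e3 : bf S u (K' *m z) = bf X u z by rewrite bfMr SK.
have e4 : qf S (K' *m z) = qf (invmx S) (X *m z).
  have -> : K' *m z = invmx S *m (X *m z) by rewrite /K' /X !mulmxA.
  by rewrite [LHS]qfM sSinv mulVmx ?uS // mul1mx.
have e5 := qfS u.
have e6 := qfD z (B *m u) sP.
have e7 : bf P z (B *m u) = bf X u z by rewrite bfMr bf_tr trmx_mul sP.
rewrite e1 e2 e3 e4 e5 e6 e7; ring.
Qed.

Let Ke := invmx S *m B^T *m P *m A.
Let L := A - B *m Ke.
Let alpha := invmx (1%:M - L^T) *m Q *m theta.
Let beta := invmx P *m alpha.
Let He := Me - Me *m A *m invmx (Q + A^T *m Me *m A) *m A^T *m Me.
Let lam := 2^-1 * qf He (A *m theta - beta).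
Let h := fun x : 'cV[R]_n => 2^-1 * qf P (x - beta).

Lemma KeE : Ke = K' *m A. Proof. by []. Qed.

Lemma qfP_Q x : qf P x = qf Q x + qf Me (A *m x).
Proof. by rewrite {1}hD' !qfE bfDm -bfMr -bfMl. Qed.

Lemma lyap x : qf P x = qf Q x + qf Rw (Ke *m x) + qf P (L *m x).
Proof.
have := LQ (A *m x) (- (Ke *m x)).
have -> : - (Ke *m x) + K' *m (A *m x) = 0 by rewrite KeE -mulmxA addNr.
rewrite !qfE bf0l addr0 -!qfE qfN => h1.
have -> : L *m x = A *m x + B *m - (Ke *m x).
  by rewrite /L mulmxBl mulmxN (mulmxA B Ke x).
by rewrite -addrA h1 -qfP_Q.
Qed.

Lemma unit1L : (1%:M - L^T) \in unitmx.
Proof.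
apply: unit_of_inj => v hv.
have hx : L *m v^T = v^T.
  apply/eqP; rewrite eq_sym -subr_eq0; apply/eqP.
  have := congr1 trmx hv; rewrite trmx_mul linearB /= trmxK trmx1 trmx0.
  by rewrite mulmxBl mul1mx.
have := lyap v^T; rewrite hx => h1.
have h2 : qf Q v^T + qf Rw (Ke *m v^T) = 0 by lra.
have h3 := posdef_psd hR (Ke *m v^T).
have [//|nv] := eqVneq v 0.
have nx : v^T != 0 by apply: contra nv => /eqP e; rewrite -(trmxK v) e trmx0.
have := (proj2 hQ) _ nx => h4; have : (0 : R) < 0 by lra.
by rewrite ltxx.
Qed.

Lemma uP : P \in unitmx. Proof. exact: posdef_unit hP. Qed.

Lemma Pbeta : P *m beta = alpha.
Proof. by rewrite /beta mulmxA mulmxV ?uP // mul1mx. Qed.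

Lemma alphaE : alpha = Q *m theta + L^T *m alpha.
Proof.
have : (1%:M - L^T) *m alpha = Q *m theta.
  by rewrite /alpha -!mulmxA mulKVmx ?unit1L.
rewrite mulmxBl mul1mx => <-; by rewrite subrK.
Qed.

Lemma LTP : L^T *m P = A^T *m Me.
Proof.
rewrite /L KeE MeX linearB /= !trmx_mul !trmxK sP sSinv mulmxBl mulmxBr.
by rewrite !mulmxA /X.
Qed.

Lemma Ebeta : P *m beta = Q *m theta + A^T *m Me *m beta.
Proof. by rewrite Pbeta {1}alphaE -Pbeta mulmxA LTP. Qed.

Lemma bf1 p q (M : 'M[R]_(p,q)) d y : bf M d y = bf 1%:M d (M *m y).
Proof. by rewrite bfMr mul1mx. Qed.

Lemma I3 x : qf Q (x - theta) + qf Me (A *m x - beta)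
  = qf P (x - beta) + qf He (A *m theta - beta).
Proof.
set d := x - theta; set e := theta - beta; set v := A *m theta - beta.
have key : A^T *m Me *m v = P *m e.
  have h1 : A^T *m Me *m A = P - Q by rewrite {1}hD' addrC addKr.
  have h2 : A^T *m Me *m beta = P *m beta - Q *m theta by rewrite Ebeta addrC addKr.
  by rewrite /v mulmxBr mulmxA h1 h2 /e mulmxBl mulmxBr opprB addrA subrK.
have HeE : qf He v = qf Me v - qf P e.
  rewrite /He -hD' !qfE bfBm.
  have -> : Me *m A *m invmx P *m A^T *m Me = (A^T *m Me)^T *m invmx P *m (A^T *m Me).
    by rewrite trmx_mul trmxK sMe !mulmxA.
  rewrite -bfMr -bfMl key bfMl bfMr sP mulmxV ?uP // mul1mx.
  done.
have ex : x - beta = d + e by rewrite /d /e addrA subrK.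
have ev : A *m x - beta = A *m d + v by rewrite /d /v mulmxBr addrA subrK.
rewrite ex ev HeE (qfD (A *m d) v sMe) (qfD d e sP) qfP_Q.
have -> : bf Me (A *m d) v = bf P d e.
  by rewrite bfMl bf1 key -bf1.
ring.
Qed.

Lemma bellman x u : stage Q Rw theta x u + h (A *m x + B *m u)
  = h x + lam + 2^-1 * qf S (u + K' *m (A *m x - beta)).
Proof.
rewrite /stage /h /lam.
have -> : A *m x + B *m u - beta = (A *m x - beta) + B *m u by rewrite addrAC.
have e1 := LQ (A *m x - beta) u.
have e2 := I3 x.
have -> : 2^-1 * qf Q (x - theta) + 2^-1 * qf Rw u + 2^-1 * qf P (A *m x - beta + B *m u)
  = 2^-1 * (qf Q (x - theta) + (qf Rw u + qf P (A *m x - beta + B *m u))) by ring.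
rewrite e1; have -> : qf Q (x - theta) + (qf Me (A *m x - beta) + qf S (u + K' *m (A *m x - beta)))
  = (qf Q (x - theta) + qf Me (A *m x - beta)) + qf S (u + K' *m (A *m x - beta)) by ring.
rewrite e2; ring.
Qed.

Let pistar := fun x : 'cV[R]_n => - Ke *m x + K' *m beta.

Lemma pistar0 x : pistar x + K' *m (A *m x - beta) = 0.
Proof. by rewrite /pistar KeE mulNmx -mulmxA mulmxBr addrACA addNr subrr addr0. Qed.

Lemma bellman_eq x : stage Q Rw theta x (pistar x) + h (A *m x + B *m pistar x) = h x + lam.
Proof. by rewrite bellman pistar0 qfE bf0l mulr0 addr0. Qed.

Lemma bellman_le x u : h x + lam <= stage Q Rw theta x u + h (A *m x + B *m u).
Proof.
rewrite bellman lerDl; apply: mulr_ge0; first by rewrite invr_ge0 ler0n.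
exact: (posdef_psd Spd _).
Qed.

Lemma h_ge0 x : 0 <= h x.
Proof. apply: mulr_ge0; first by rewrite invr_ge0 ler0n. exact: posdef_psd. Qed.

Lemma parallelogram x y : qf P (x + y) <= 2 * qf P x + 2 * qf P y.
Proof.
have h1 := qfD x y sP; have h2 := qfD x (- y) sP.
rewrite bfNr qfN in h2.
have := posdef_psd hP (x - y); lra.
Qed.

Lemma domination : exists eps c, 0 < eps <= 1 /\
  forall x u, eps * h x - c <= stage Q Rw theta x u.
Proof.
have [C [C0 hC]] := dominate P hQ.
pose eps := (2 * C + 2)^-1.
have epos : 0 < eps by rewrite invr_gt0; lra.
have e1 : eps * (2 * C + 2) = 1 by rewrite mulVf // gt_eqF //; lra.
pose c := qf P (theta - beta).
have c0 : 0 <= c by exact: posdef_psd.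
exists eps, c; split; first by apply/andP; split => //; nra.
move=> x u; rewrite /stage /h.
have q1 := posdef_psd hR u.
have q2 := posdef_psd hQ (x - theta).
have q3 := hC (x - theta).
have q4 : qf P (x - beta) <= 2 * qf P (x - theta) + 2 * c.
  by have := parallelogram (x - theta) (theta - beta); rewrite addrA subrK.
have q5 : 0 <= qf P (x - theta) by exact: posdef_psd.
nra.
Qed.

Lemma traj_shift x v t :
  traj A B x v t.+1 = traj A B (A *m x + B *m v 0%N) (fun t => v t.+1) t.
Proof. by elim: t => [//|t IH] /=; rewrite -IH. Qed.

Lemma cost_shift x v N : cost A B Q Rw theta x v N.+1 =
  stage Q Rw theta x (v 0%N) + cost A B Q Rw theta (A *m x + B *m v 0%N) (fun t => v t.+1) N.
Proof.
rewrite /cost big_ord_recl; congr (_ + _).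
by apply: eq_bigr => i _; rewrite lift0 traj_shift.
Qed.

Lemma lower_bound eps c K : 0 < eps <= 1 ->
  (forall x u, eps * h x - c <= stage Q Rw theta x u) ->
  lam + c <= eps * K ->
  forall N x v, N%:R * lam + (1 - (1 - eps) ^+ N) * (h x - K) <= cost A B Q Rw theta x v N.
Proof.
move=> /andP [e0 e1] hdom hK; elim => [|N IH] x v.
  by rewrite /cost big_ord0 expr0 subrr !mul0r addr0.
rewrite cost_shift; set x1 := A *m x + B *m v 0%N.
have i1 := IH x1 (fun t => v t.+1).
have b1 := bellman_le x (v 0%N).
have d1 := hdom x (v 0%N).
set st := stage Q Rw theta x (v 0%N) in b1 d1 *.
set rN := (1 - eps) ^+ N in i1 *.
have r0 : 0 <= rN by apply: exprn_ge0; lra.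
have r1 : rN <= 1 by apply: exprn_ile1; lra.
have -> : (1 - eps) ^+ N.+1 = (1 - eps) * rN by rewrite exprS.
have t1 : (1 - rN) * (h x + lam) <= (1 - rN) * (st + h x1).
  by apply: ler_wpM2l; lra.
have t2 : rN * (eps * h x - c) <= rN * st by apply: ler_wpM2l.
have t3 : rN * (lam + c) <= rN * (eps * K) by apply: ler_wpM2l.
rewrite -natr1; nra.
Qed.

Let ustar x0 := fun t => - Ke *m fb_traj A B Ke (K' *m beta) x0 t + K' *m beta.

Lemma traj_fb x0 t : traj A B x0 (ustar x0) t = fb_traj A B Ke (K' *m beta) x0 t.
Proof. by elim: t => [//|t IH] /=; rewrite IH. Qed.

Lemma cost_star x0 N : cost A B Q Rw theta x0 (ustar x0) N
  = N%:R * lam + h x0 - h (fb_traj A B Ke (K' *m beta) x0 N).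
Proof.
elim: N => [|N IH].
  by rewrite /cost big_ord0 mul0r add0r subrr.
rewrite /cost big_ord_recr /=; rewrite /cost in IH; rewrite IH traj_fb.
have := bellman_eq (fb_traj A B Ke (K' *m beta) x0 N).
rewrite /pistar /ustar -natr1 => hb.
lra.
Qed.
End Main.


Section DP.
Variable R : archiRcfType.

Definition quadf p (M : 'M[R]_p) (g : 'cV[R]_p) (c : R) (x : 'cV[R]_p) : R :=
  2^-1 * qf M x + bf 1%:M g x + c.

Lemma bfT1 p q (M : 'M[R]_(p,q)) a w : bf M a w = bf 1%:M (M^T *m a) w.
Proof. by rewrite bfMl trmxK mulmx1. Qed.

Lemma bf1C p (a b : 'cV[R]_p) : bf 1%:M a b = bf 1%:M b a.
Proof. by rewrite bf_tr trmx1. Qed.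

Lemma quad_add p (M1 M2 : 'M[R]_p) g1 g2 c1 c2 x :
  quadf M1 g1 c1 x + quadf M2 g2 c2 x = quadf (M1 + M2) (g1 + g2) (c1 + c2) x.
Proof. rewrite /quadf !qfE bfDm bfDl; ring. Qed.

Lemma quad_comp p q (M : 'M[R]_p) g c (F : 'M[R]_(p,q)) d x : M^T = M ->
  quadf M g c (F *m x + d) =
  quadf (F^T *m M *m F) (F^T *m (M *m d + g)) (c + 2^-1 * qf M d + bf 1%:M g d) x.
Proof.
move=> sM; rewrite /quadf qfD // qfM bfDr.
have -> : bf M (F *m x) d = bf 1%:M (F^T *m (M *m d)) x.
  by rewrite [RHS]bf1C !bfMr bfMl mul1mx.
have -> : bf 1%:M g (F *m x) = bf 1%:M (F^T *m g) x.
  by rewrite bfMr mul1mx bfT1 bf1C.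
rewrite mulmxDr bfDl; lra.
Qed.

Definition isq p (W : 'cV[R]_p -> R) :=
  exists M g c, M^T = M /\ psd M /\ forall x, W x = quadf M g c x.

Lemma sym_comp p q (M : 'M[R]_p) (F : 'M[R]_(p,q)) : M^T = M -> (F^T *m M *m F)^T = F^T *m M *m F.
Proof. by move=> sM; rewrite !trmx_mul trmxK sM mulmxA. Qed.

Lemma psd_comp p q (M : 'M[R]_p) (F : 'M[R]_(p,q)) : psd M -> psd (F^T *m M *m F).
Proof. by move=> pM x; rewrite -qfM. Qed.

Lemma psd_add p (M1 M2 : 'M[R]_p) : psd M1 -> psd M2 -> psd (M1 + M2).
Proof. by move=> h1 h2 x; rewrite qfE bfDm -!qfE; apply: addr_ge0. Qed.

End DP.

Section DP2.
Variable R : archiRcfType.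
Variables n m : nat.
Variables (A : 'M[R]_n) (B : 'M[R]_(n, m)) (Q : 'M[R]_n) (Rw : 'M[R]_m)
  (theta : 'cV[R]_n).
Hypothesis hQ : posdef Q.
Hypothesis hR : posdef Rw.

Lemma dp_step (W : 'cV[R]_n -> R) : isq W -> exists (W' : 'cV[R]_n -> R) (pi : 'cV[R]_n -> 'cV[R]_m),
  isq W' /\ (forall x, stage Q Rw theta x (pi x) + W (A *m x + B *m pi x) = W' x) /\
  (forall x u, W' x <= stage Q Rw theta x u + W (A *m x + B *m u)).
Proof.
move=> [P0 [g [c [sP0 [pP0 hW]]]]].
have [sQ pQ] := hQ; have [sR pR] := hR.
pose S0 := Rw + B^T *m P0 *m B.
have qS u : qf S0 u = qf Rw u + qf P0 (B *m u) by rewrite /S0 !qfE bfDm -bfMr -bfMl.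
have S0pd : posdef S0.
  split; first by rewrite /S0 linearD /= sR sym_comp.
  move=> u nu; rewrite qS; have := pR u nu; have := pP0 (B *m u); lra.
have uS0 := posdef_unit S0pd.
pose F := - (invmx S0 *m B^T *m P0 *m A).
pose f := - (invmx S0 *m B^T *m g).
pose pi := fun x => F *m x + f.
pose W' := fun x => stage Q Rw theta x (pi x) + W (A *m x + B *m pi x).
exists W', pi; split; last split => //.
- pose G := (A + B *m F).
  exists (1%:M^T *m Q *m 1%:M + F^T *m Rw *m F + G^T *m P0 *m G).
  exists (1%:M^T *m (Q *m - theta + 0) + F^T *m (Rw *m f + 0) + G^T *m (P0 *m (B *m f) + g)).
  exists (0 + 2^-1 * qf Q (- theta) + bf 1%:M 0 (- theta) + (0 + 2^-1 * qf Rw f + bf 1%:M 0 f)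
          + (c + 2^-1 * qf P0 (B *m f) + bf 1%:M g (B *m f))).
  split.
    have s1 := sym_comp (1%:M : 'M[R]_n) sQ; have s2 := sym_comp F sR; have s3 := sym_comp G sP0.
    move: s1 s2 s3; move: (1%:M^T *m Q *m 1%:M) (F^T *m Rw *m F) (G^T *m P0 *m G) => X1 X2 X3 e1 e2 e3.
    by rewrite !linearD /= e1 e2 e3.
  split; first by apply: psd_add; [apply: psd_add|]; apply: psd_comp => // x;
    [exact: posdef_psd | exact: posdef_psd].
  move=> x; rewrite /W' /stage hW -!quad_add -!quad_comp //.
  have -> : A *m x + B *m pi x = G *m x + B *m f by rewrite /pi /G mulmxDr mulmxDl mulmxA addrA.
  rewrite /quadf !bf0l mul1mx !addr0; congr (_ + _ + _).
- move=> x u.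
  set w := u - pi x.
  have hu : u = pi x + w by rewrite /w addrC subrK.
  set y0 := A *m x + B *m pi x.
  have hy : A *m x + B *m u = y0 + B *m w by rewrite hu mulmxDr addrA.
  have cross : Rw *m pi x + B^T *m (P0 *m y0) + B^T *m g = 0.
    rewrite /y0 /pi mulmxDr !mulmxDr.
    have e1 : Rw *m (F *m x) + B^T *m (P0 *m (B *m (F *m x))) = - (B^T *m (P0 *m (A *m x))).
      rewrite !mulmxA -mulmxDl -[Rw *m F]/(Rw *m F) -mulmxDl.
      rewrite -[Rw + B^T *m P0 *m B]/S0 /F mulmxN !mulmxA mulmxV // mul1mx mulNmx.
      by rewrite ?mulmxA.
    have e2 : Rw *m f + B^T *m (P0 *m (B *m f)) = - (B^T *m g).
      rewrite !mulmxA -mulmxDl -[Rw + B^T *m P0 *m B]/S0 /f mulmxN !mulmxA mulmxV // mul1mx.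
      done.
    move: e1 e2; move: (Rw *m (F *m x)) (Rw *m f) (B^T *m (P0 *m (A *m x)))
      (B^T *m (P0 *m (B *m (F *m x)))) (B^T *m (P0 *m (B *m f))) (B^T *m g) => a b c1 d e gg h1 h2.
    apply/matrixP => i j; have := congr1 (fun M : 'M[R]_(m,1) => M i j) h1; have := congr1 (fun M : 'M[R]_(m,1) => M i j) h2.
    rewrite /= !mxE; lra.
  have t1 : bf 1%:M (Rw *m pi x) w = bf Rw (pi x) w by rewrite bfMl sR mulmx1.
  have t2 : bf 1%:M (B^T *m (P0 *m y0)) w = bf P0 y0 (B *m w).
    by rewrite bfMl trmxK mulmx1 bfMl sP0 bfMr.
  have t3 : bf 1%:M (B^T *m g) w = bf 1%:M g (B *m w) by rewrite bfMl trmxK mulmx1 bfMr mul1mx.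
  have cs : bf Rw (pi x) w + bf P0 y0 (B *m w) + bf 1%:M g (B *m w) = 0.
    have := congr1 (fun v => bf 1%:M v w) cross; rewrite /= bf0l.
    rewrite (bfDl _ (Rw *m pi x + B^T *m (P0 *m y0))) (bfDl _ (Rw *m pi x)).
    by rewrite t1 t2 t3.
  have q1 := posdef_psd S0pd w; rewrite qS in q1.
  rewrite hy hu /W' /stage !hW /quadf -/y0.
  rewrite (qfD (pi x) w sR) (qfD y0 (B *m w) sP0) (bfDr 1%:M g y0 (B *m w)).
  lra.
Qed.

Lemma dp_exists N : exists W : 'cV[R]_n -> R, isq W /\
  forall x0, is_min_cost A B Q Rw theta x0 N (W x0).
Proof.
elim: N => [|N [W [qW hW]]].
  exists (fun _ => 0); split.
    exists 0, 0, 0; split; first by rewrite trmx0.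
    split; first by move=> x; rewrite qfE bf0m.
    by move=> x; rewrite /quadf qfE bf0m bf0l; ring.
  move=> x0; split; first by exists (fun _ => 0); rewrite /cost big_ord0.
  by move=> u; rewrite /cost big_ord0.
have [W' [pi [qW' [heq hle]]]] := dp_step qW.
exists W'; split => // x0; split.
  have [[u' hu'] _] := hW (A *m x0 + B *m pi x0).
  exists (fun t => if t is t'.+1 then u' t' else pi x0).
  by rewrite cost_shift /= hu' heq.
move=> u; rewrite cost_shift.
have [_ h2] := hW (A *m x0 + B *m u 0%N).
have := h2 (fun t => u t.+1); have := hle x0 (u 0%N); lra.
Qed.
End DP2.

Section Avg.
Variable R : archiRcfType.

Lemma big_N (x : R) : exists N0 : nat, forall N, (N0 <= N)%N -> x < N%:R /\ (0 : R) < N%:R.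
Proof.
exists (Num.Def.archi_bound `|x|).+1 => N hN.
have h1 := archi_boundP (normr_ge0 x).
have h2 : (((Num.Def.archi_bound `|x|).+1)%:R : R) <= N%:R by rewrite ler_nat.
have h3 : x <= `|x| := ler_norm x.
have h4 := ler0n R (Num.Def.archi_bound `|x|).
rewrite -natr1 in h2; split; lra.
Qed.

Lemma avg_limsup (s : nat -> R) l K1 : (forall N, s N <= N%:R * l + K1) ->
  limsup_le (fun N => N%:R^-1 * s N) l.
Proof.
move=> hs eps e0.
have [N0 hN0] := big_N (`|K1| / eps).
exists N0 => N /hN0 [h1 h2].
set t := N%:R in h1 h2 *.
have h3 : `|K1| < eps * t.
  have e : `|K1| = eps * (`|K1| / eps) by field; lra.
  by rewrite e ltr_pM2l.
have h4 : t^-1 * s N <= t^-1 * (t * l + `|K1|).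
  apply: ler_wpM2l; first by rewrite invr_ge0; lra.
  have := hs N; have := ler_norm K1; rewrite /t; lra.
have h5 : t^-1 * `|K1| <= t^-1 * (eps * t).
  by apply: ler_wpM2l; [rewrite invr_ge0; lra | lra].
have e1 : t^-1 * (t * l + `|K1|) = l + t^-1 * `|K1| by field; lra.
have e2 : t^-1 * (eps * t) = eps by field; lra.
lra.
Qed.

Lemma avg_liminf (s : nat -> R) l K1 : (forall N, N%:R * l - K1 <= s N) ->
  liminf_ge (fun N => N%:R^-1 * s N) l.
Proof.
move=> hs eps e0.
have hs' : forall N, - s N <= N%:R * (- l) + K1 by move=> N; have := hs N; lra.
have [N0 hN0] := avg_limsup hs' e0.
by exists N0 => N /hN0; rewrite mulrN; lra.
Qed.

Lemma avg_cvg (s : nat -> R) l K1 : (forall N, s N <= N%:R * l + K1) ->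
  (forall N, N%:R * l - K1 <= s N) -> cvg_to (fun N => N%:R^-1 * s N) l.
Proof.
move=> h1 h2 eps e0.
have e2 : 0 < eps / 2 by lra.
have [N1 hN1] := avg_limsup h1 e2.
have [N2 hN2] := avg_liminf h2 e2.
exists (maxn N1 N2) => N hN.
have := hN1 N (leq_trans (leq_maxl _ _) hN).
have := hN2 N (leq_trans (leq_maxr _ _) hN).
move=> a b; rewrite ltr_norml; apply/andP; split; lra.
Qed.
End Avg.


Section Final.
Variable R : archiRcfType.
Variables n m : nat.
Variables (A : 'M[R]_n) (B : 'M[R]_(n, m)) (Q : 'M[R]_n) (Rw : 'M[R]_m)
  (theta : 'cV[R]_n) (P : 'M[R]_n).
Hypothesis hQ : posdef Q.
Hypothesis hR : posdef Rw.
Hypothesis hP : posdef P.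
Hypothesis hD : P = Q + A^T *m (P - P *m B *m invmx (B^T *m P *m B + Rw) *m B^T *m P) *m A.

Let S := Rw + B^T *m P *m B.
Let Me := P - P *m B *m invmx S *m B^T *m P.
Let K' := invmx S *m B^T *m P.
Let Ke := invmx S *m B^T *m P *m A.
Let L := A - B *m Ke.
Let alpha := invmx (1%:M - L^T) *m Q *m theta.
Let beta := invmx P *m alpha.
Let He := Me - Me *m A *m invmx (Q + A^T *m Me *m A) *m A^T *m Me.
Let lam := 2^-1 * qf He (A *m theta - beta).
Let h := fun x : 'cV[R]_n => 2^-1 * qf P (x - beta).
Let ustar x0 := fun t => - Ke *m fb_traj A B Ke (K' *m beta) x0 t + K' *m beta.

Lemma LB : exists K, forall N x v, N%:R * lam - K <= cost A B Q Rw theta x v N.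
Proof.
have [eps [c [he hdom]]] := domination A B theta hQ hR hP.
have /andP [e0 e1] := he.
pose K := (`|lam| + `|c|) / eps.
have K0 : 0 <= K by apply: divr_ge0; [apply: addr_ge0|lra].
have hK : lam + c <= eps * K.
  have -> : eps * K = `|lam| + `|c| by rewrite /K; field; lra.
  have := ler_norm lam; have := ler_norm c; lra.
exists K => N x v.
have := lower_bound hQ hR hP hD he hdom hK N x v.
have := h_ge0 A B Q Rw theta hP x.
have r0 : 0 <= (1 - eps) ^+ N by apply: exprn_ge0; lra.
have r1 : (1 - eps) ^+ N <= 1 by apply: exprn_ile1; lra.
move: ((1 - eps) ^+ N) r0 r1 => r r0 r1.
rewrite -/h -/lam. nra.
Qed.


Lemma final :
  (forall x0 : 'cV[R]_n, exists V : nat -> R,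
      (forall N, is_min_cost A B Q Rw theta x0 N (V N)) /\
      cvg_to (fun N => (N%:R)^-1 * V N) lam) /\
  (forall x : 'cV[R]_n,
      (exists u : 'cV[R]_m,
          stage Q Rw theta x u + h (A *m x + B *m u) = h x + lam) /\
      (forall u : 'cV[R]_m,
          h x + lam <= stage Q Rw theta x u + h (A *m x + B *m u))) /\
  (forall x0 : 'cV[R]_n,
      let u := fun t => - Ke *m fb_traj A B Ke (K' *m beta) x0 t + K' *m beta in
      limsup_le (fun N => (N%:R)^-1 * cost A B Q Rw theta x0 u N) lam /\
      (forall v : nat -> 'cV[R]_m,
         liminf_ge (fun N => (N%:R)^-1 * cost A B Q Rw theta x0 v N) lam)).
Proof.
have [K hLB] := LB.
have UB : forall x0 N, cost A B Q Rw theta x0 (ustar x0) N <= N%:R * lam + h x0.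
  move=> x0 N.
  have b : cost A B Q Rw theta x0 (ustar x0) N
    = N%:R * lam + h x0 - h (fb_traj A B Ke (K' *m beta) x0 N) := cost_star theta hQ hR hP hD x0 N.
  have a : 0 <= h (fb_traj A B Ke (K' *m beta) x0 N) := h_ge0 A B Q Rw theta hP _.
  rewrite b; lra.
split.
  move=> x0.
  have ex : forall N, exists v, is_min_cost A B Q Rw theta x0 N v.
    move=> N; have [W [_ hW]] := dp_exists A B theta hQ hR N; exists (W x0); exact: hW.
  pose V := fun N => proj1_sig (constructive_indefinite_description _ (ex N)).
  have hV : forall N, is_min_cost A B Q Rw theta x0 N (V N).
    by move=> N; exact: (proj2_sig (constructive_indefinite_description _ (ex N))).
  exists V; split => //.
  have hh : 0 <= h x0 := h_ge0 A B Q Rw theta hP x0.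
  have nK := ler_norm K.
  apply: (avg_cvg (K1 := `|K| + h x0)) => N.
    have := (proj2 (hV N)) (ustar x0); have := UB x0 N. have := normr_ge0 K; lra.
  have [[u hu] _] := hV N; have := hLB N x0 u; rewrite hu; have := normr_ge0 K; lra.
split.
  move=> x; split; last by move=> u; exact (bellman_le theta hQ hR hP hD x u).
  by exists (- Ke *m x + K' *m beta); exact (bellman_eq theta hQ hR hP hD x).
move=> x0 u; split.
  by apply: (avg_limsup (K1 := h x0)) => N; exact: UB x0 N.
by move=> v; apply: (avg_liminf (K1 := K)) => N; exact: hLB N x0 v.
Qed.
End Final.

Unset Implicit Arguments.
Set Strict Implicit.

Theorem proposition1 (R : archiRcfType) (n m : nat)
  (A : 'M[R]_n) (B : 'M[R]_(n, m)) (Q : 'M[R]_n) (Rw : 'M[R]_m)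
  (theta : 'cV[R]_n) (P : 'M[R]_n) :
  controllable A B -> posdef Q -> posdef Rw ->
  posdef P ->
  P = Q + A^T *m (P - P *m B *m invmx (B^T *m P *m B + Rw) *m B^T *m P) *m A ->
  let Me := P - P *m B *m invmx (Rw + B^T *m P *m B) *m B^T *m P in
  let He := Me - Me *m A *m invmx (Q + A^T *m Me *m A) *m A^T *m Me in
  let Ke := invmx (Rw + B^T *m P *m B) *m B^T *m P *m A in
  let K' := invmx (Rw + B^T *m P *m B) *m B^T *m P in
  let alpha := invmx (1%:M - (A - B *m Ke)^T) *m Q *m theta in
  let beta := invmx P *m alpha in
  let lambda := 2^-1 * qf He (A *m theta - beta) in
  let h := fun x : 'cV[R]_n => 2^-1 * qf P (x - beta) in
  (forall x0 : 'cV[R]_n, exists V : nat -> R,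
      (forall N, is_min_cost A B Q Rw theta x0 N (V N)) /\
      cvg_to (fun N => (N%:R)^-1 * V N) lambda) /\
  (forall x : 'cV[R]_n,
      (exists u : 'cV[R]_m,
          stage Q Rw theta x u + h (A *m x + B *m u) = h x + lambda) /\
      (forall u : 'cV[R]_m,
          h x + lambda <= stage Q Rw theta x u + h (A *m x + B *m u))) /\
  (forall x0 : 'cV[R]_n,
      let u := fun t => - Ke *m fb_traj A B Ke (K' *m beta) x0 t + K' *m beta in
      limsup_le (fun N => (N%:R)^-1 * cost A B Q Rw theta x0 u N) lambda /\
      (forall v : nat -> 'cV[R]_m,
         liminf_ge (fun N => (N%:R)^-1 * cost A B Q Rw theta x0 v N) lambda)).
Proof.
move=> _ hQ hR hP hD.
exact (final theta hQ hR hP hD).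
Qed.
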